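(* Let $\alpha=(\alpha_1,\dots,\alpha_t)\in\mathcal{P}(n)$ with $\delta(\alpha)=\big(1,2,\dots,q-1,q,q^{(s_q)},(q-1)^{(s_{q-1})},\dots,1^{(s_1)}\big)$, where $q\ge1$ and $s_1,\dots,s_q\ge0$. Then \[\alpha_1\in A_1=\Big\{q,\ q+s_q,\ q+s_q+s_{q-1},\ \dots,\ q+\sum_{i=1}^q s_i\Big\}.\] Equivalently, $\alpha\in\mathcal{P}(n,k)^*$ for some $k\in A_1$.
   Context: A partition of a positive integer $n$ is a finite non-increasing sequence $\alpha=(\alpha_1,\dots,\alpha_t)$ of positive integers with sum $n$; $\mathcal{P}(n)$ is the set of partitions of $n$, and $\alpha_i=0$ for $i>t$. The diagonal sequence is $\delta(\alpha)=(d_k)_{k\ge1}$ with $d_k=|\{i:1\le i\le k,\ \alpha_i+i-1\ge k\}|$, trailing zeros omitted; $j^{(s)}$ denotes $s$ consecutive entries equal to $j$. $\mathcal{P}(n,k)^*$ denotes the set of partitions of $n$ whose largest part equals $k$. *)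

(* Defs.v *)
From mathcomp Require Import all_boot.
Set Implicit Arguments. Unset Strict Implicit. Unset Printing Implicit Defensive.

(* Parts are 1-indexed in the paper: alpha_i = nth 0 alpha (i-1),
   and alpha_i = 0 for i > size alpha (automatic with default 0). *)
Definition is_partition (n : nat) (alpha : seq nat) : bool :=
  [&& sorted geq alpha, all (fun a => 0 < a) alpha & sumn alpha == n].

Definition part (alpha : seq nat) (i : nat) : nat := nth 0 alpha i.-1.

Definition diag_entry (alpha : seq nat) (k : nat) : nat :=
  count (fun i => k <= part alpha i + i - 1) (iota 1 k).

Definition strip_trailing_zeros (s : seq nat) : seq nat :=
  let r := rev s in rev (drop (find (fun x => x != 0) r) r).

(* The diagonal sequence delta(alpha) = (d_k)_{k>=1}, trailing zeros omitted.
   d_k = 0 for k >= alpha_1 + size alpha, hence for k > sumn alpha + size alpha,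
   so listing k = 1 .. sumn alpha + size alpha loses nothing. *)
Definition delta (alpha : seq nat) : seq nat :=
  strip_trailing_zeros
    [seq diag_entry alpha k | k <- iota 1 (sumn alpha + size alpha)].

Definition delta_shape (q : nat) (s : nat -> nat) : seq nat :=
  iota 1 q ++ flatten [seq nseq (s j) j | j <- rev (iota 1 q)].

(* Main.v *)
Require Import Defs.
From mathcomp Require Import all_boot.
From mathcomp Require Import zify.

Lemma nth_all0 (t : seq nat) i : all (pred1 0) t -> nth 0 t i = 0.
Proof.
move=> /allP H; case: (ltnP i (size t)) => Hi; last by rewrite nth_default.
by apply/eqP; apply: H; apply: mem_nth.
Qed.

Lemma nth_strip (s : seq nat) i : nth 0 (strip_trailing_zeros s) i = nth 0 s i.
Proof.
rewrite /strip_trailing_zeros.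
set r := rev s; set m := find _ r.
have -> : s = rev (drop m r) ++ rev (take m r).
  by rewrite -rev_cat cat_take_drop revK.
rewrite nth_cat; case: ifP => // /negbT; rewrite -leqNgt => Hi.
rewrite (nth_default _ Hi); symmetry; apply: nth_all0; rewrite all_rev.
have : ~~ has (fun x => x != 0) (take m r) by rewrite has_take_leq ?find_size // ltnn.
move/hasPn=> H; apply/allP=> x /H /=; by rewrite negbK.
Qed.

Definition T q (s : nat -> nat) := flatten [seq nseq (s j) j | j <- rev (iota 1 q)].

Lemma T_S q s : T q.+1 s = nseq (s q.+1) q.+1 ++ T q s.
Proof.
rewrite /T (_ : iota 1 q.+1 = iota 1 q ++ [:: q.+1]); last by have := iotaD 1 q 1; rewrite addn1 add1n.
by rewrite rev_cat.
Qed.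

Lemma T_le q s m : nth 0 (T q s) m <= q.
Proof.
elim: q m => [|q IH] m; first by rewrite nth_nil.
rewrite T_S nth_cat size_nseq; case: ifP => _; first by rewrite nth_nseq; case: ifP.
by apply: leq_trans (IH _) _.
Qed.

Lemma T_drop q s m : nth 0 (T q s) m.+1 < nth 0 (T q s) m ->
  exists2 j, 1 <= j <= q & m.+1 = \sum_(j <= i < q.+1) s i.
Proof.
elim: q m => [|q IH] m; first by rewrite !nth_nil.
rewrite T_S !nth_cat size_nseq.
case: (ltngtP m.+1 (s q.+1)) => Hm.
- by rewrite !nth_nseq Hm (ltnW Hm) ltnn.
- rewrite subSn // => /IH [j Hj Hs].
  exists j; first by lia.
  rewrite big_nat_recr /=; last by lia.
  by rewrite -Hs; lia.
- move=> _; exists q.+1; first by lia.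
  by rewrite big_nat1 Hm.
Qed.

Definition f (alpha : seq nat) i := part alpha i + i - 1.

Lemma nth_le_sumn (s : seq nat) i : nth 0 s i <= sumn s.
Proof.
elim: s i => [|x s IH] [|i] //=; first by apply: leq_addr.
by apply: leq_trans (IH i) _; apply: leq_addl.
Qed.

Lemma count_le (p r : pred nat) (s : seq nat) :
  (forall x, x \in s -> p x -> r x) -> count p s <= count r s.
Proof.
elim: s => [|x s IH] //= H.
have H' : forall y, y \in s -> p y -> r y by move=> y Hy; apply: H; rewrite inE Hy orbT.
have := IH H'; have := H x (mem_head _ _).
by case: (p x); case: (r x) => //= ? ?; lia.
Qed.

Lemma count_lt (p r : pred nat) (s : seq nat) :
  (forall x, x \in s -> p x -> r x) -> has (fun x => r x && ~~ p x) s ->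
  count p s < count r s.
Proof.
elim: s => [|x s IH] //= H.
have H' : forall y, y \in s -> p y -> r y by move=> y Hy; apply: H; rewrite inE Hy orbT.
have Hl := @count_le p r s H'.
case/orP.
- case/andP=> -> /negbTE ->; by rewrite add0n add1n ltnS.
- move=> /(IH H') Hlt; have := H x (mem_head _ _).
  by case: (p x); case: (r x) => //= ?; lia.
Qed.

Theorem proposition2p8 (n : nat) (alpha : seq nat) (q : nat) (s : nat -> nat) :
  0 < n -> is_partition n alpha -> 1 <= q ->
  delta alpha = delta_shape q s ->
  exists2 j : nat, 1 <= j <= q.+1 &
    part alpha 1 = q + \sum_(j <= i < q.+1) s i.
Proof.
move=> n0 /and3P [Hsort Hpos /eqP Hsum] q1 Hdelta.
set D := diag_entry alpha.
set E := fun k => nth 0 (delta_shape q s) k.-1.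
have HDE : forall k, 1 <= k -> D k = E k.
  move=> k k1; rewrite /E -Hdelta /delta nth_strip.
  set N := sumn alpha + size alpha.
  case: (ltnP k.-1 N) => HkN.
    by rewrite (nth_map 0) ?size_iota // nth_iota // add1n prednK.
  rewrite nth_default ?size_map ?size_iota //.
  apply/eqP; rewrite -leqn0 leqNgt -has_count; apply/hasPn => i.
  rewrite mem_iota => /andP [i1 i2]; rewrite -ltnNge /part.
  case: (ltnP i.-1 (size alpha)) => Hi.
    have := nth_le_sumn alpha i.-1; lia.
  rewrite nth_default //; lia.
have HEq : forall j, 1 <= j <= q -> E j = j.
  move=> j /andP [j1 j2]; rewrite /E /delta_shape nth_cat size_iota.
  have -> : j.-1 < q by lia.
  rewrite nth_iota; lia.
have HEgt : forall j, q < j -> E j = nth 0 (T q s) (j.-1 - q).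
  move=> j jq; rewrite /E /delta_shape nth_cat size_iota.
  have -> : j.-1 < q = false by lia.
  by [].
have mono : forall i, 1 <= i -> part alpha i.+1 <= part alpha i.
  move=> i i1; rewrite /part /=.
  case: (ltnP i (size alpha)) => Hi; last by rewrite nth_default.
  move/sortedP: Hsort => /(_ 0 i.-1); rewrite prednK //; apply; done.
have Dq : D q = q by rewrite HDE // HEq // q1 leqnn.
have kq : q <= part alpha 1.
  have : all (fun i => q <= part alpha i + i - 1) (iota 1 q).
    by rewrite all_count size_iota; apply/eqP; exact Dq.
  move/allP => /(_ 1); rewrite mem_iota leqnn /= add1n => /(_ q1); lia.
set k := part alpha 1 in kq *.
case: (ltngtP q k) => Hk; last first.
- by exists q.+1; rewrite ?leqnn ?big_geq ?addn0.
- lia.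
have Dq1 : D q.+1 <= q by rewrite HDE // HEgt // T_le.
have [i0 Hi0 Hfi0] : exists2 i0, 1 <= i0 <= q.+1 & part alpha i0 + i0 - 1 < q.+1.
  move: Dq1; rewrite /D /diag_entry => Hc.
  have : ~~ all (fun i => q.+1 <= part alpha i + i - 1) (iota 1 q.+1).
    by rewrite all_count size_iota; apply/negP => /eqP; lia.
  rewrite -has_predC => /hasP [i]; rewrite mem_iota /= -ltnNge => Hi Hf.
  exists i => //; lia.
have Dk1 : D k.+1 = count (fun i => k.+1 <= part alpha i.+1 + i) (iota 1 k).
  rewrite /D /diag_entry /= -/k addn1 subn1 /= ltnn add0n.
  rewrite (iotaDl 1 1) count_map; apply: eq_count => i /=.
  rewrite add1n; apply/idP/idP; lia.
have Dlt : D k.+1 < D k.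
  rewrite Dk1 /D /diag_entry; apply: count_lt.
    move=> i; rewrite mem_iota => /andP [i1 _] /=.
    have := mono i i1; lia.
  apply/negPn/negP => /hasPn Hn.
  have Hall : forall j, j < k.+1 -> k <= part alpha j.+1 + j.
    elim=> [|j IH] Hj; first by rewrite addn0.
    have := Hn j.+1; rewrite mem_iota /=.
    have -> : j.+1 < 1 + k by lia.
    have -> : k <= part alpha j.+1 + j.+1 - 1.
      have := IH (ltnW Hj); lia.
    move/(_ isT); rewrite /= negbK; lia.
  have := Hall i0.-1; rewrite prednK; last by lia.
  lia.
move: Dlt; rewrite !HDE // ?HEgt //; last by lia.
have -> : k.+1.-1 - q = (k.-1 - q).+1 by lia.
move/T_drop => [j Hj Hs]; exists j; first by lia.
rewrite -Hs; lia.
Qed.
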